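(* Let $G$ be a finite abelian group and $\sim$ a nontrivial equivalence relation on $G - \{0\}$ such that for $x \neq y$, $x \sim y$ implies $(y-x) \sim (-x)$. Suppose $z \in G-\{0\}$ satisfies $z \sim (-z)$, and let $[z]$ denote its equivalence class. Then $[z] \cup \{0\}$ is a proper subgroup of $G$.
   Context: An equivalence relation is nontrivial if it has at least two classes. *)

(* Defs.v *)
From HB Require Import structures.
From mathcomp Require Import all_boot all_order all_algebra.
Set Implicit Arguments. Unset Strict Implicit. Unset Printing Implicit Defensive.
Import GRing.Theory.
Local Open Scope ring_scope.

(* r is an equivalence relation on G - {0} (values of r at 0 are irrelevant). *)
Definition equiv_on_nonzero (G : zmodType) (r : G -> G -> Prop) : Prop :=
  [/\ (forall x : G, x != 0 -> r x x),
      (forall x y : G, x != 0 -> y != 0 -> r x y -> r y x) &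
      (forall x y w : G, x != 0 -> y != 0 -> w != 0 -> r x y -> r y w -> r x w)].

Definition nontrivial_on_nonzero (G : zmodType) (r : G -> G -> Prop) : Prop :=
  exists x y : G, [/\ x != 0, y != 0 & ~ r x y].

Definition eq_class (G : zmodType) (r : G -> G -> Prop) (z : G) : G -> Prop :=
  fun x => x != 0 /\ r z x.

Definition is_subgroup (G : zmodType) (S : G -> Prop) : Prop :=
  S 0 /\ (forall x y, S x -> S y -> S (x - y)).

Definition is_proper_subgroup (G : zmodType) (S : G -> Prop) : Prop :=
  is_subgroup S /\ exists g : G, ~ S g.

(* Main.v *)
Require Import Defs.
From mathcomp Require Import all_boot all_order all_algebra.
From Stdlib Require Import Classical.
Local Open Scope ring_scope.
Import GRing.Theory.

Theorem lemma3p14 (G : finZmodType) (r : G -> G -> Prop)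
  (Hequiv : equiv_on_nonzero r)
  (Hnontriv : nontrivial_on_nonzero r)
  (Hprop : forall x y : G, x != 0 -> y != 0 -> x != y -> r x y -> r (y - x) (- x))
  (z : G) (hz : z != 0) (hzz : r z (- z)) :
  is_proper_subgroup (fun x : G => x = 0 \/ eq_class r z x).
Proof.
case: Hequiv => Hrefl Hsym Htr.
have hnz : - z != 0 by rewrite oppr_eq0.
have neg : forall x, x != 0 -> r z x -> r z (- x).
  move=> x hx hzx.
  have hnx : - x != 0 by rewrite oppr_eq0.
  case: (eqVneq x (- z)) => [->|hxz]; first by rewrite opprK; apply: Hrefl.
  have hxz0 : x + z != 0 by rewrite addr_eq0.
  have h1 : r (- z) x by apply: (Htr _ z) => //; apply: Hsym.
  have hzx' : - z != x by rewrite eq_sym.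
  have := Hprop (- z) x hnz hx hzx' h1.
  rewrite opprK => h2.
  have h3 : r x (x + z).
    apply: (Htr _ z) => //; first by apply: Hsym.
    by apply: Hsym.
  have hxx : x != x + z.
    apply/eqP => h; move/eqP: hz; apply; apply: (addrI x); by rewrite addr0 -h.
  have := Hprop x (x + z) hx hxz0 hxx h3.
  by have -> : x + z - x = z by rewrite addrC addKr.
split.
  split; first by left.
  move=> a b [->|[ha hza]] [->|[hb hzb]].
  - by left; rewrite subr0.
  - right; rewrite sub0r; split; first by rewrite oppr_eq0.
    exact: neg.
  - by right; rewrite subr0.
  - case: (eqVneq a b) => [->|hab]; first by left; rewrite subrr.
    right.
    have hab0 : a - b != 0 by rewrite subr_eq0.
    have hba : r b a by apply: (Htr _ z) => //; apply: Hsym.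
    have hba' : b != a by rewrite eq_sym.
    have := Hprop b a hb ha hba' hba => h.
    split => //.
    apply: (Htr _ (- b)) => //; first by rewrite oppr_eq0.
    + exact: neg.
    + apply: Hsym => //; by rewrite oppr_eq0.
case: Hnontriv => x [y [hx hy hn]].
case: (classic (r z x)) => hzx.
  exists y => -[h|[_ h]]; first by move/eqP: hy.
  apply: hn; apply: (Htr _ z) => //; by apply: Hsym.
exists x => -[h|[_ h]]; first by move/eqP: hx.
exact: hzx.
Qed.
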